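(* Let $F$ be a recurrent set and let $X\subset F$ be a bifix code. Then $X$ is an $F$-thin and $F$-maximal bifix code if and only if its $F$-degree $d_F(X)$ is finite. In this case the set $I(X)$ of internal factors of $X$ satisfies $I(X)=\{w\in F\mid \delta_X(w)<d_F(X)\}$.
   Context: $A$ is a finite alphabet. A set $F\subset A^*$ is recurrent if it is nonempty, contains all factors of its elements, and for all $u,w\in F$ there is $v\in F$ with $uvw\in F$. A bifix code is a set $X\subset A^+$ such that no element is a proper prefix or a proper suffix of another element. For $X\subset F$, $X$ is an $F$-maximal bifix code if it is not properly contained in any bifix code $Y\subset F$, and $F$-thin if some word of $F$ is not a factor of a word of $X$. A parse of a word $w$ with respect to $X$ is a triple $(v,x,u)$ with $w=vxu$, $v\in A^*\setminus A^*X$ (no suffix of $v$ lies in $X$), $x\in X^*$, $u\in A^*\setminus XA^*$ (no prefix of $u$ lies in $X$); $\delta_X(w)$ is the number of parses of $w$. The $F$-degree is $d_F(X)=\max_{w\in F}\delta_X(w)$ (possibly infinite). $I(X)=\{w\in A^*\mid A^+wA^+\cap X\ne\emptyset\}$. *)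

(* Defs.v *)
From mathcomp Require Import all_boot.
From Stdlib Require Import ClassicalEpsilon.
Set Implicit Arguments. Unset Strict Implicit. Unset Printing Implicit Defensive.

Section Words.
Variable A : finType.
Definition word := seq A.
Definition lang := word -> Prop.

Definition pb (P : Prop) : bool :=
  if excluded_middle_informative P then true else false.

Definition lsubset (X Y : lang) : Prop := forall w, X w -> Y w.

Definition factor (u w : word) : Prop := exists p s, w = p ++ u ++ s.

Definition recurrent (F : lang) : Prop :=
  (exists w, F w) /\
  (forall w u, F w -> factor u w -> F u) /\
  (forall u w, F u -> F w -> exists v, F v /\ F (u ++ v ++ w)).

Definition proper_prefix (u x : word) : Prop := exists v, v <> [::] /\ x = u ++ v.
Definition proper_suffix (u x : word) : Prop := exists v, v <> [::] /\ x = v ++ u.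

Definition bifix_code (X : lang) : Prop :=
  (forall x, X x -> x <> [::]) /\
  (forall x y, X x -> X y -> ~ proper_prefix x y /\ ~ proper_suffix x y).

Definition F_maximal_bifix (F X : lang) : Prop :=
  bifix_code X /\ lsubset X F /\
  forall Y, bifix_code Y -> lsubset Y F -> lsubset X Y -> lsubset Y X.

Definition F_thin (F X : lang) : Prop :=
  exists w, F w /\ ~ (exists x, X x /\ factor w x).

Definition in_AstarX (X : lang) (v : word) : Prop := exists p x, X x /\ v = p ++ x.
Definition in_XAstar (X : lang) (u : word) : Prop := exists x s, X x /\ u = x ++ s.

Inductive star (X : lang) : lang :=
| star_nil : star X [::]
| star_cons : forall x y, X x -> star X y -> star X (x ++ y).

Definition is_parse (X : lang) (v x u : word) : Prop :=
  ~ in_AstarX X v /\ star X x /\ ~ in_XAstar X u.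

(* delta_X(w): number of parses of w.  A parse (v,x,u) of w is determined by
   the positions i = |v| <= j = |v x| in w, so we count such pairs. *)
Definition delta (X : lang) (w : word) : nat :=
  #|[set ij : 'I_(size w).+1 * 'I_(size w).+1 |
      (ij.1 <= ij.2)%N &&
      pb (is_parse X (take ij.1 w) (drop ij.1 (take ij.2 w)) (drop ij.2 w))]|.

Definition is_F_degree (F X : lang) (d : nat) : Prop :=
  (exists w, F w /\ delta X w = d) /\ (forall w, F w -> (delta X w <= d)%N).

Definition internal (X : lang) (w : word) : Prop :=
  exists x p s, X x /\ p <> [::] /\ s <> [::] /\ x = p ++ w ++ s.
End Words.

(* Main.v *)
Require Import Defs.
From mathcomp Require Import all_boot.
From Stdlib Require Import ClassicalEpsilon Classical.
Set Implicit Arguments. Unset Strict Implicit. Unset Printing Implicit Defensive.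

Lemma pbP (P : Prop) : reflect P (pb P).
Proof. rewrite /pb; case: excluded_middle_informative => h; [by left | by right]. Qed.

Lemma npbP (P : Prop) : reflect (~ P) (~~ pb P).
Proof. rewrite /pb; case: excluded_middle_informative => h; [by right | by left]. Qed.

Lemma card_ord_count (n : nat) (P : pred nat) :
  #|[set i : 'I_n | P i]| = count P (iota 0 n).
Proof.
rewrite -val_enum_ord count_map cardsE cardE /enum_mem size_filter.
rewrite [X in _ = count _ X](@eq_filter _ _ predT) // filter_predT.
by apply: eq_count => i; rewrite !inE.
Qed.

Section W.
Variable A : finType.

Lemma cat_split (a b c d : seq A) : a ++ b = c ++ d ->
  (exists e, a = c ++ e /\ d = e ++ b) \/ (exists e, c = a ++ e /\ b = e ++ d).
Proof.
elim: a c => [|z a IH] c /=.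
  by move=> ->; right; exists c.
case: c => [|z' c] /= h.
  by left; exists (z :: a).
case: h => -> /IH [[e [-> ->]]|[e [-> ->]]]; [left|right]; by exists e.
Qed.

Lemma mid_nil (p w s : seq A) : w <> [::] -> p ++ w ++ s <> [::].
Proof. by case: p => //; case: w. Qed.

Lemma drop_take_eq (i j : nat) (w : seq A) : i <= j -> drop i (take j w) = take (j - i) (drop i w).
Proof. by move=> h; rewrite take_drop subnK. Qed.

Lemma drop_drop_eq (i j : nat) (w : seq A) : i <= j -> drop j w = drop (j - i) (drop i w).
Proof. by move=> h; rewrite drop_drop subnK. Qed.

Variable X : lang A.
Hypothesis Xne : forall x, X x -> x <> [::].
Hypothesis Xpre : forall x y, X x -> X y -> ~ proper_prefix x y.
Hypothesis Xsuf : forall x y, X x -> X y -> ~ proper_suffix x y.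

Lemma Xpre_eq x y e : X x -> X y -> y = x ++ e -> e = [::].
Proof. move=> hx hy he; case: e he => // a e he; exfalso; apply: (Xpre hx hy); by exists (a::e). Qed.

Lemma Xsuf_eq x y e : X x -> X y -> y = e ++ x -> e = [::].
Proof. move=> hx hy he; case: e he => // a e he; exfalso; apply: (Xsuf hx hy); by exists (a::e). Qed.

Lemma star_cat a b : star X a -> star X b -> star X (a ++ b).
Proof. elim=> [//|x y hx _ IH] hb; rewrite -catA; apply: star_cons => //; exact: IH. Qed.

Lemma star1 x : X x -> star X x.
Proof. move=> hx; rewrite -(cats0 x); apply: star_cons => //; exact: star_nil. Qed.

Lemma greedyR r : exists x y, r = x ++ y /\ star X x /\ ~ in_XAstar X y.
Proof.
elim: {r}(size r).+1 {-2}r (ltnSn (size r)) => // n IH r hr.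
case: (classic (in_XAstar X r)) => [[x0 [s [hx hr0]]]|hn]; last first.
  by exists [::], r; split => //; split => //; exact: star_nil.
subst r.
have hs : size s < n.
  move: hr; rewrite size_cat ltnS; apply: leq_trans; rewrite -{1}(add0n (size s)) ltn_add2r.
  by case: x0 hx => // hx; case: (Xne hx).
case: (IH s hs) => x [y [-> [hsx hy]]].
exists (x0 ++ x), y; split; first by rewrite catA.
by split => //; apply: star_cons.
Qed.

Lemma greedyL l : exists v x, l = v ++ x /\ star X x /\ ~ in_AstarX X v.
Proof.
elim: {l}(size l).+1 {-2}l (ltnSn (size l)) => // n IH l hl.
case: (classic (in_AstarX X l)) => [[p [x0 [hx hl0]]]|hn]; last first.
  by exists l, [::]; rewrite cats0; split => //; split => //; exact: star_nil.
subst l.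
have hs : size p < n.
  move: hl; rewrite size_cat ltnS; apply: leq_trans; rewrite -{1}(addn0 (size p)) ltn_add2l.
  by case: x0 hx => // hx; case: (Xne hx).
case: (IH p hs) => v [x [-> [hsx hv]]].
exists v, (x ++ x0); split; first by rewrite catA.
by split => //; apply: star_cat => //; exact: star1.
Qed.

Lemma uniqR x x' y y' : star X x -> star X x' -> ~ in_XAstar X y -> ~ in_XAstar X y' ->
  x ++ y = x' ++ y' -> x = x'.
Proof.
move=> hs; elim: hs x' => [|x1 x2 hx1 hs2 IH] x' hs' hy hy' /=.
  case: hs' => [//|x1' x2' hx1' _] he; exfalso; apply: hy.
  by exists x1', (x2' ++ y'); rewrite /= in he; rewrite he catA.
case: hs' => [|x1' x2' hx1' hs2'] he.
  by exfalso; apply: hy'; exists x1, (x2 ++ y); rewrite /= in he; rewrite -he catA.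
rewrite -!catA in he; case: (cat_split he) => [[e [h1 h2]]|[e [h1 h2]]].
- have e0 := Xpre_eq hx1' hx1 h1; subst e; rewrite cats0 in h1; subst x1.
  by rewrite (IH x2' hs2' hy hy' (esym h2)).
- have e0 := Xpre_eq hx1 hx1' h1; subst e; rewrite cats0 in h1; subst x1'.
  by rewrite (IH x2' hs2' hy hy' h2).
Qed.

Lemma star_rdec z : star X z -> z = [::] \/ exists x1 x2, z = x1 ++ x2 /\ star X x1 /\ X x2.
Proof.
elim=> [|x y hx hy [->|[y1 [y2 [-> [h1 h2]]]]]]; first by left.
  by right; exists [::], x; rewrite cats0; split => //; split => //; exact: star_nil.
right; exists (x ++ y1), y2; rewrite catA; split => //; split => //; exact: star_cons.
Qed.

Lemma uniqL v v' x x' : star X x -> star X x' -> ~ in_AstarX X v -> ~ in_AstarX X v' ->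
  v ++ x = v' ++ x' -> x = x'.
Proof.
elim: {x}(size x).+1 {-2}x (ltnSn (size x)) x' v v' => // n IH x hn x' v v' hs hs' hv hv' he.
case: (star_rdec hs) => [hx0|[x1 [x2 [hx [hs1 hx2]]]]];
  case: (star_rdec hs') => [hx0'|[x1' [x2' [hx' [hs1' hx2']]]]]; subst.
- by [].
- by exfalso; apply: hv; exists (v' ++ x1'), x2'; rewrite cats0 in he; rewrite he !catA.
- by exfalso; apply: hv'; exists (v ++ x1), x2; rewrite cats0 in he; rewrite -he !catA.
have hsz : size x1 < n.
  move: hn; rewrite size_cat ltnS; apply: leq_trans; rewrite -{1}(addn0 (size x1)) ltn_add2l.
  by rewrite lt0n size_eq0; apply/eqP; exact: Xne hx2.
rewrite !catA in he; case: (cat_split he) => [[e [h1 h2]]|[e [h1 h2]]].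
- have e0 := Xsuf_eq hx2 hx2' h2; subst e; rewrite ?cats0 ?cat0s in h1 h2; subst x2'.
  by rewrite (IH x1 hsz x1' v v' hs1 hs1' hv hv' h1).
- have e0 := Xsuf_eq hx2' hx2 h2; subst e; rewrite ?cats0 ?cat0s in h1 h2; subst x2'.
  by rewrite (IH x1 hsz x1' v v' hs1 hs1' hv hv' (esym h1)).
Qed.

Definition AX w := pb (in_AstarX X w).
Definition XA w := pb (in_XAstar X w).
Definition Pre (w : seq A) := count (fun i => ~~ AX (take i w)) (iota 0 (size w).+1).
Definition Suf (w : seq A) := count (fun i => ~~ XA (drop i w)) (iota 0 (size w).+1).

Lemma delta_Pre w : delta X w = Pre w.
Proof.
rewrite /delta /Pre -card_ord_count.
set S := [set ij : 'I_(size w).+1 * 'I_(size w).+1 | _].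
have inj : {in S &, injective (fun ij : 'I_(size w).+1 * 'I_(size w).+1 => ij.1)}.
  move=> [i j] [i' j']; rewrite !inE /= => /andP [hij /pbP [hv [hx hu]]]
    /andP [hij' /pbP [hv' [hx' hu']]] eqi; subst i'.
  rewrite (drop_take_eq w hij) (drop_drop_eq w hij) in hx hu.
  rewrite (drop_take_eq w hij') (drop_drop_eq w hij') in hx' hu'.
  have := uniqR hx hx' hu hu'; rewrite !cat_take_drop => /(_ erefl) /(congr1 size).
  have hs : size (drop i w) = size w - i by rewrite size_drop.
  have le1 : j - i <= size (drop i w) by rewrite hs leq_sub2r // -ltnS.
  have le2 : j' - i <= size (drop i w) by rewrite hs leq_sub2r // -ltnS.
  rewrite !size_takel // => e; congr pair; apply: val_inj => /=.
  by rewrite -(subnK hij) -(subnK hij') e.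
have im : [set ij.1 | ij in S] = [set i : 'I_(size w).+1 | ~~ AX (take i w)].
  apply/setP => i; rewrite inE; apply/imsetP/idP.
    move=> [[i0 j] hS ->]; move: hS; rewrite inE => /andP [_ /pbP [hv _]].
    by apply/npbP.
  move=> /npbP h.
  case: (greedyR (drop i w)) => x [y [hxy [hx hy]]].
  have hj : i + size x < (size w).+1.
    have hi : i <= size w by rewrite -ltnS.
    have hsx : size x <= size w - i by rewrite -size_drop hxy size_cat leq_addr.
    rewrite ltnS; apply: (@leq_trans (i + (size w - i))); first by rewrite leq_add2l.
    by rewrite subnKC.
  have hle : i <= i + size x by apply: leq_addr.
  exists (i, Ordinal hj) => //; rewrite inE /= hle /=; apply/pbP.
  rewrite (drop_take_eq w hle) (drop_drop_eq w hle) addKn hxy.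
  by rewrite take_size_cat // drop_size_cat.
by rewrite -im card_in_imset.
Qed.

Lemma delta_Suf w : delta X w = Suf w.
Proof.
rewrite /delta /Suf -card_ord_count.
set S := [set ij : 'I_(size w).+1 * 'I_(size w).+1 | _].
have inj : {in S &, injective (fun ij : 'I_(size w).+1 * 'I_(size w).+1 => ij.2)}.
  move=> [i j] [i' j']; rewrite !inE /= => /andP [hij /pbP [hv [hx hu]]]
    /andP [hij' /pbP [hv' [hx' hu']]] eqj; subst j'.
  have hj : j <= size w by rewrite -ltnS.
  rewrite -(take_takel w hij) in hv.
  rewrite -(take_takel w hij') in hv'.
  have := uniqL hx hx' hv hv'; rewrite !cat_take_drop => /(_ erefl) /(congr1 size).
  rewrite !size_drop size_takel // => e; congr pair; apply: val_inj => /=.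
  by apply/eqP; rewrite -(eqn_add2r (j - i)) {2}e !subnKC.
have im : [set ij.2 | ij in S] = [set j : 'I_(size w).+1 | ~~ XA (drop j w)].
  apply/setP => j; rewrite inE; apply/imsetP/idP.
    move=> [[i j0] hS ->]; move: hS; rewrite inE => /andP [_ /pbP [_ [_ hu]]].
    by apply/npbP.
  move=> /npbP h.
  case: (greedyL (take j w)) => v [x [hvx [hx hv]]].
  have hj : j <= size w by rewrite -ltnS.
  have hle : size v <= j.
    by rewrite -(size_takel hj) hvx size_cat leq_addr.
  have hi : size v < (size w).+1 by apply: leq_ltn_trans hle (ltn_ord j).
  exists (Ordinal hi, j) => //; rewrite inE /= hle /=; apply/pbP.
  by rewrite -(take_takel w hle) hvx take_size_cat // drop_size_cat //.
by rewrite -(card_in_imset inj) im.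
Qed.

Lemma Pre_cat w q : Pre (w ++ q) = Pre w + count (fun k => ~~ AX (w ++ take k q)) (iota 1 (size q)).
Proof.
rewrite /Pre size_cat -addSn iotaD count_cat; congr (_ + _).
  apply: eq_in_count => i; rewrite mem_iota add0n => /andP [_ hi].
  rewrite take_cat; case: ltnP => h //.
  have -> : i = size w by apply/eqP; rewrite eqn_leq h -ltnS hi.
  by rewrite subnn take0 cats0 take_size.
rewrite add0n -addn1 iotaDl count_map; apply: eq_count => k /=.
by rewrite take_cat ltnNge leq_addr /= addKn.
Qed.

Lemma Suf_cat p w : Suf (p ++ w) = count (fun k => ~~ XA (drop k p ++ w)) (iota 0 (size p)) + Suf w.
Proof.
rewrite /Suf size_cat -addnS iotaD count_cat; congr (_ + _).
  apply: eq_in_count => i; rewrite mem_iota add0n => /andP [_ hi].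
  by rewrite drop_cat hi.
rewrite add0n -{1}(addn0 (size p)) iotaDl count_map; apply: eq_count => k /=.
by rewrite drop_cat ltnNge leq_addr /= addKn.
Qed.

Lemma Pre_Suf w : Pre w = Suf w.
Proof. by rewrite -delta_Pre -delta_Suf. Qed.

Lemma count_pos (P : pred nat) s k : k \in s -> P k -> 0 < count P s.
Proof. by move=> hk hp; rewrite -has_count; apply/hasP; exists k. Qed.

Lemma count_zero (P : pred nat) s : (forall k, k \in s -> ~~ P k) -> count P s = 0.
Proof. move=> h; apply/eqP; rewrite -leqn0 leqNgt -has_count; apply/hasPn => k hk; exact: h. Qed.

Lemma mono p w s : delta X w <= delta X (p ++ w ++ s).
Proof.
rewrite !delta_Pre catA Pre_cat; apply: leq_trans (leq_addr _ _).
by rewrite !Pre_Suf Suf_cat leq_addl.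
Qed.

Lemma internal_lt p w s : X (p ++ w ++ s) -> p <> [::] -> s <> [::] ->
  delta X w < delta X (p ++ w ++ s).
Proof.
move=> hx hp hs; rewrite !delta_Pre catA Pre_cat; apply: leq_trans (leq_addr _ _).
rewrite !Pre_Suf Suf_cat -[X in X < _]add0n ltn_add2r.
apply: (@count_pos _ _ 0).
  by rewrite mem_iota add0n lt0n size_eq0; apply/eqP.
rewrite drop0; apply/npbP => [[x' [e [hx' he]]]].
apply: (Xpre hx' hx); exists (e ++ s); split; first by case: e {he} => //; case: s hs.
by rewrite catA he catA.
Qed.

Section FF.
Variable F : lang A.
Hypothesis HF : recurrent F.
Hypothesis XF : lsubset X F.

Lemma Ffact p w s : F (p ++ w ++ s) -> F w.
Proof. move: HF => [_ [hf _]] h; apply: (hf _ _ h); by exists p, s. Qed.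

Lemma Frec u w : F u -> F w -> exists v, F v /\ F (u ++ v ++ w).
Proof. by move: HF => [_ [_ hr]]; apply: hr. Qed.

Lemma Rsat d w0 q : (forall z, F z -> delta X z <= d) -> delta X w0 = d ->
  F (w0 ++ q) -> q <> [::] -> in_AstarX X (w0 ++ q).
Proof.
move=> hd hw0 hF hq; apply: NNPP => hn.
have hc : 0 < count (fun k => ~~ AX (w0 ++ take k q)) (iota 1 (size q)).
  apply: (@count_pos _ _ (size q)).
    by rewrite mem_iota lt0n size_eq0 ltnSn andbT; apply/eqP.
  by rewrite take_size; apply/npbP.
move: (hd _ hF); rewrite delta_Pre Pre_cat -delta_Pre hw0.
by rewrite leqNgt -{1}(addn0 d) ltn_add2l hc.
Qed.

Lemma cat_ne_r (p s : seq A) : s <> [::] -> p ++ s <> [::].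
Proof. by case: p => //; case: s. Qed.

Lemma cat_ne_l (p s : seq A) : p <> [::] -> p ++ s <> [::].
Proof. by case: p. Qed.

Lemma take_ne k (s : seq A) : 0 < k -> k <= size s -> take k s <> [::].
Proof. by move=> h1 h2 /(congr1 size); rewrite size_takel // => e; rewrite e in h1. Qed.

Lemma drop_ne k (s : seq A) : k < size s -> drop k s <> [::].
Proof. by move=> h /(congr1 size) /eqP; rewrite size_drop subn_eq0 leqNgt h. Qed.

Lemma part2a d : is_F_degree F X d -> forall w, internal X w -> F w /\ delta X w < d.
Proof.
move=> [_ hd] w [x [p [s [hx [hp [hs hxe]]]]]]; subst x.
split; first exact: (Ffact (XF hx)).
exact: leq_trans (internal_lt hx hp hs) (hd _ (XF hx)).
Qed.

Lemma part2b d : is_F_degree F X d -> forall w, F w -> delta X w < d -> internal X w.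
Proof.
move=> [[w0 [Fw0 hw0]] hd] w Fw hlt; apply: NNPP => hni.
have [t [_ FZ]] := Frec Fw Fw0.
have hZ : delta X (w ++ t ++ w0) = d.
  apply/eqP; rewrite eqn_leq hd //= -{1}hw0.
  by move: (mono (w ++ t) w0 [::]); rewrite cats0 -catA.
have [t2 [_ FY]] := Frec Fw0 FZ.
have hc : count (fun k => ~~ AX (w ++ take k (t ++ w0))) (iota 1 (size (t ++ w0))) = 0.
  apply: count_zero => k; rewrite mem_iota => /andP [hk1 hk2]; rewrite negbK; apply/pbP.
  have hq : take k (t ++ w0) <> [::] by apply: take_ne => //; rewrite -ltnS -add1n.
  have FW : F (w0 ++ (t2 ++ w ++ take k (t ++ w0))).
    apply: (@Ffact [::] _ (drop k (t ++ w0))); rewrite /= -!catA cat_take_drop; exact: FY.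
  have hq' : t2 ++ w ++ take k (t ++ w0) <> [::] by do 2 apply: cat_ne_r.
  have [p' [x [hx he]]] := Rsat hd hw0 FW hq'.
  rewrite catA in he; case: (cat_split he) => [[e [h1 h2]]|[e [h1 h2]]].
    case: e h1 h2 => [|a e] h1 h2; first by exists [::], x.
    by exfalso; apply: hni; exists x, (a :: e), (take k (t ++ w0)).
  by exists e, x.
move: hZ; rewrite delta_Pre Pre_cat hc addn0 -delta_Pre => e.
by move: hlt; rewrite e ltnn.
Qed.

Lemma part1b : (exists d, is_F_degree F X d) -> F_thin F X /\ F_maximal_bifix F X.
Proof.
move=> [d [[w0 [Fw0 hw0]] hd]].
split.
  case: (classic (exists x0, X x0)) => [[x0 hx0]|hno]; last first.
    exists [::]; split; first exact: (@Ffact [::] _ w0).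
    by move=> [x [hx _]]; apply: hno; exists x.
  have [t [_ F1]] := Frec Fw0 (XF hx0).
  have hw1 : delta X (w0 ++ t ++ x0) = d.
    apply/eqP; rewrite eqn_leq hd //= -hw0; exact: (mono [::] w0 (t ++ x0)).
  have n1 : w0 ++ t ++ x0 <> [::] by rewrite catA; apply: cat_ne_r; exact: Xne hx0.
  move: F1 hw1 n1; set w1 := w0 ++ t ++ x0 => F1 hw1 n1.
  have [t1 [_ F2]] := Frec F1 F1.
  have [t2 [_ F3]] := Frec F2 F1.
  exists ((w1 ++ t1 ++ w1) ++ t2 ++ w1); split => //.
  move=> [x [hx [p [s hxe]]]].
  have e : p ++ ((w1 ++ t1 ++ w1) ++ t2 ++ w1) ++ s = (p ++ w1 ++ t1) ++ w1 ++ (t2 ++ w1 ++ s)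
    by rewrite !catA.
  rewrite hxe e in hx.
  have hp1 : p ++ w1 ++ t1 <> [::] by apply: mid_nil.
  have hs1 : t2 ++ w1 ++ s <> [::] by apply: mid_nil.
  have := leq_trans (internal_lt hx hp1 hs1) (hd _ (XF hx)).
  by rewrite hw1 ltnn.
split.
  by split; [exact: Xne | move=> x y hx hy; split; [exact: Xpre | exact: Xsuf]].
split; first exact: XF.
move=> Y [Yne Ybi] YF XY y hy.
have [t [_ Fy]] := Frec Fw0 (YF _ hy).
have hty : t ++ y <> [::] by apply: cat_ne_r; exact: Yne.
have [p [x [hx he]]] := Rsat hd hw0 Fy hty.
rewrite catA in he; case: (cat_split he) => [[e [h1 h2]]|[e [h1 h2]]].
  case: e h1 h2 => [|a e] h1 h2; first by rewrite /= in h2; rewrite -h2.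
  by exfalso; case: (Ybi y x hy (XY _ hx)) => _; apply; exists (a :: e).
case: e h1 h2 => [|a e] h1 h2; first by rewrite h2.
by exfalso; case: (Ybi x y (XY _ hx) hy) => _; apply; exists (a :: e).
Qed.

Lemma cat_self_r (z e : seq A) : z = z ++ e -> e = [::].
Proof.
move/(congr1 size); rewrite size_cat -{1}(addn0 (size z)) => /eqP.
by rewrite eqn_add2l eq_sym size_eq0 => /eqP.
Qed.

Lemma cat_self_l (z e : seq A) : z = e ++ z -> e = [::].
Proof.
move/(congr1 size); rewrite size_cat -{1}(add0n (size z)) => /eqP.
by rewrite eqn_add2r eq_sym size_eq0 => /eqP.
Qed.

Lemma neg4 (a b c d : Prop) : ~ (a -> b -> c \/ d) -> a /\ b /\ ~ c /\ ~ d.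
Proof. move=> h; case: (classic a) => ha; case: (classic b) => hb; tauto. Qed.

Lemma part1a : F_thin F X -> F_maximal_bifix F X -> exists d, is_F_degree F X d.
Proof.
move=> [u [Fu hu]] [_ [_ hmaxY]].
suff [N hN] : exists N, forall w, F w -> delta X w <= N.
  pose P := fun k => pb (exists w, F w /\ delta X w = k).
  have exP : exists k, P k by exists (delta X u); apply/pbP; exists u.
  have ubP : forall k, P k -> k <= N by move=> k /pbP [w [Fw <-]]; exact: hN.
  case: (ex_maxnP exP ubP) => d /pbP Pd maxd; exists d; split => // w Fw.
  by apply: maxd; apply/pbP; exists w.
case: (classic (forall s, F s -> s <> [::] ->
    in_AstarX X s \/ exists x p, X x /\ x = p ++ s)) => [LC|nLC].
  exists (delta X u) => w Fw.
  have [t [_ FZ]] := Frec Fu Fw.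
  have := mono (u ++ t) w [::]; rewrite cats0 -catA => /leq_trans; apply.
  have hc : count (fun k => ~~ AX (u ++ take k (t ++ w))) (iota 1 (size (t ++ w))) = 0.
    apply: count_zero => k; rewrite mem_iota => /andP [hk1 hk2]; rewrite negbK; apply/pbP.
    have hq : take k (t ++ w) <> [::] by apply: take_ne => //; rewrite -ltnS -add1n.
    have Fuq : F (u ++ take k (t ++ w)).
      apply: (@Ffact [::] _ (drop k (t ++ w))); rewrite /= -catA cat_take_drop; exact: FZ.
    have huq : u ++ take k (t ++ w) <> [::] by apply: cat_ne_r.
    case: (LC _ Fuq huq) => // [[x [p [hx hxe]]]].
    by exfalso; apply: hu; exists x; split => //; exists p, (take k (t ++ w)).
  by rewrite !delta_Pre Pre_cat hc addn0.
case: (classic (forall r, F r -> r <> [::] ->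
    in_XAstar X r \/ exists x q, X x /\ x = r ++ q)) => [RC|nRC].
  exists (delta X u) => w Fw.
  have [t [_ FZ]] := Frec Fw Fu.
  apply: leq_trans (mono [::] w (t ++ u)) _.
  have hc : count (fun k => ~~ XA (drop k (w ++ t) ++ u)) (iota 0 (size (w ++ t))) = 0.
    apply: count_zero => k; rewrite mem_iota add0n => /andP [_ hk]; rewrite negbK; apply/pbP.
    have hr : drop k (w ++ t) ++ u <> [::] by apply: cat_ne_l; exact: drop_ne.
    have Fr : F (drop k (w ++ t) ++ u).
      apply: (@Ffact (take k (w ++ t)) _ [::]); rewrite cats0 catA cat_take_drop -catA.
      exact: FZ.
    case: (RC _ Fr hr) => // [[x [q [hx hxe]]]].
    by exfalso; apply: hu; exists x; split => //; exists (drop k (w ++ t)), q; rewrite hxe -catA.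
  by rewrite /= !delta_Suf catA Suf_cat hc add0n.
exfalso.
move: nLC => /not_all_ex_not [s /neg4 [Fs [sne [sA sS]]]].
move: nRC => /not_all_ex_not [r /neg4 [Fr [rne [rA rS]]]].
have [v [_ Fz]] := Frec Fr Fs.
have zne : r ++ v ++ s <> [::] by apply: cat_ne_l.
pose Y := fun y => X y \/ y = r ++ v ++ s.
have hY : bifix_code Y.
  split; first by move=> y [hy|->]; [exact: Xne | exact: zne].
  move=> x y [hx|->] [hy|->].
  - by split; [exact: Xpre | exact: Xsuf].
  - split.
      move=> [e [_ he]]; case: (cat_split he) => [[e' [h1 h2]]|[e' [h1 h2]]].
        by apply: rA; exists x, e'.
      by apply: rS; exists x, e'.
    move=> [e [_ he]]; rewrite catA in he; case: (cat_split he) => [[e' [h1 h2]]|[e' [h1 h2]]].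
      by apply: sS; exists x, e'.
    by apply: sA; exists e', x.
  - split.
      by move=> [e [_ he]]; apply: rS; exists y, (v ++ s ++ e); split => //; rewrite he -!catA.
    by move=> [e [_ he]]; apply: sS; exists y, (e ++ r ++ v); split => //; rewrite he -!catA.
  - split; move=> [e [ne he]]; apply: ne.
      exact: cat_self_r he.
    exact: cat_self_l he.
have YF : lsubset Y F by move=> y [hy|->]; [exact: XF | exact: Fz].
have XY : lsubset X Y by move=> y hy; left.
have hz := hmaxY Y hY YF XY (r ++ v ++ s) (or_intror erefl).
by apply: rS; exists (r ++ v ++ s), (v ++ s).
Qed.

End FF.
End W.

Theorem mainTheorem2 (A : finType) (F X : lang A) :
  recurrent F -> lsubset X F -> bifix_code X ->
  ((F_thin F X /\ F_maximal_bifix F X) <-> exists d, is_F_degree F X d) /\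
  (forall d, is_F_degree F X d ->
     forall w, internal X w <-> (F w /\ (delta X w < d)%N)).
Proof.
move=> HF XF [Xne Xbi].
have Xpre : forall x y, X x -> X y -> ~ proper_prefix x y.
  by move=> x y hx hy; case: (Xbi x y hx hy).
have Xsuf : forall x y, X x -> X y -> ~ proper_suffix x y.
  by move=> x y hx hy; case: (Xbi x y hx hy).
split.
  split; first by move=> [th mx]; exact: (part1a Xne Xpre Xsuf HF XF th mx).
  exact: (part1b Xne Xpre Xsuf HF XF).
move=> d hd w; split; first exact: (part2a Xne Xpre Xsuf HF XF hd).
by move=> [Fw hw]; exact: (part2b Xne Xpre Xsuf HF hd Fw hw).
Qed.
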